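(* Let $k,n$ be positive integers with $k\leqslant n$ and let $X\subseteq [n]^k_<$. Then $X$ is a matroid if and only if its barycentric subdivision $\mathcal{B}(X)\subseteq \mathrm{Conf}_k([n])$ is a Coxeter matroid.
   Context: $[n]:=\{1,\ldots,n\}$. $[n]^k_<$ denotes the set of $k$-element subsets of $[n]$, each identified with the increasing tuple $(x_1<\cdots<x_k)$ of its elements; $A+B:=(A\setminus B)\cup(B\setminus A)$. $X\subseteq[n]^k_<$ is a matroid if for all $A,B\in X$ and $a\in A\setminus B$ there exists $b\in B\setminus A$ with $A+\{a,b\}\in X$. $\mathrm{Conf}_k([n])$ is the set of $k$-tuples $(a_1,\ldots,a_k)$ of pairwise distinct elements of $[n]$. For $x\in\mathrm{Conf}_k([n])$ and $i\in[k]$, let $P^{(i)}(x)\in[n]^i_<$ be the increasing rearrangement of $\{x_1,\ldots,x_i\}$. The Bruhat order on $[n]^i_<$ is $u\leqslant v$ iff $u_j\leqslant v_j$ for all $j\in[i]$; the Bruhat order on $\mathrm{Conf}_k([n])$ is $x\leqslant y$ iff $P^{(i)}(x)\leqslant P^{(i)}(y)$ in $[n]^i_<$ for all $i\in[k]$ (this is the Bruhat order of the parabolic quotient $S_n^{\{k+1,\ldots,n-1\}}$ under the identification of $\mathrm{Conf}_k([n])$ with that quotient). The symmetric group $S_n$ acts on $\mathrm{Conf}_k([n])$ by $w\cdot(x_1,\ldots,x_k)=(w(x_1),\ldots,w(x_k))$. A subset $Y\subseteq\mathrm{Conf}_k([n])$ is a Coxeter matroid if for every $w\in S_n$ the set $\{w\cdot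 y: y\in Y\}$ has a unique maximal element (a maximum) in the Bruhat order of $\mathrm{Conf}_k([n])$. The barycentric subdivision of $X$ is $\mathcal{B}(X):=\{(x_{\sigma(1)},\ldots,x_{\sigma(k)}): x\in X,\ \sigma\in S_k\}\subseteq\mathrm{Conf}_k([n])$. *)

(* Defs.v *)
(* [n] = {1..n} is modelled by 'I_n = {0..n-1} (order-preserving relabeling). *)
From mathcomp Require Import all_boot all_fingroup.
Set Implicit Arguments. Unset Strict Implicit. Unset Printing Implicit Defensive.

Section Defs.
Variables (n k : nat).

Definition incr (x : seq 'I_n) : bool := sorted (fun a b : 'I_n => (a < b)%N) x.

Definition elts (x : seq 'I_n) : {set 'I_n} := [set c in x].

Definition symdiff (A B : {set 'I_n}) : {set 'I_n} := (A :\: B) :|: (B :\: A).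

Definition is_matroid (X : {set k.-tuple 'I_n}) : Prop :=
  forall A B, A \in X -> B \in X ->
  forall a : 'I_n, a \in elts A -> a \notin elts B ->
  exists b : 'I_n, [/\ b \in elts B, b \notin elts A &
     exists2 C, C \in X & elts C = symdiff (elts A) [set a; b]].

Definition conf : {set k.-tuple 'I_n} := [set t : k.-tuple 'I_n | uniq t].

Definition Pfx (x : seq 'I_n) (i : nat) : seq 'I_n :=
  sort (fun a b : 'I_n => (a <= b)%N) (take i x).

Definition bruhat_sub (u v : seq 'I_n) : bool :=
  all2 (fun a b : 'I_n => (a <= b)%N) u v.

Definition bruhat_conf (x y : k.-tuple 'I_n) : Prop :=
  forall i, (1 <= i <= k)%N -> bruhat_sub (Pfx x i) (Pfx y i).

Definition act_set (w : {perm 'I_n}) (Y : {set k.-tuple 'I_n}) : {set k.-tuple 'I_n} :=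
  [set map_tuple w y | y in Y].

Definition coxeter_matroid (Y : {set k.-tuple 'I_n}) : Prop :=
  Y \subset conf /\
  forall w : {perm 'I_n}, exists2 m, m \in act_set w Y &
    forall y, y \in act_set w Y -> bruhat_conf y m.

Definition bary (X : {set k.-tuple 'I_n}) : {set k.-tuple 'I_n} :=
  [set [tuple tnth x (s i) | i < k] | x : k.-tuple 'I_n in X, s : 'S_k in [set: 'S_k]].

End Defs.

(* Main.v *)
Require Import Defs.
From mathcomp Require Import all_boot all_fingroup zify.
Set Implicit Arguments. Unset Strict Implicit. Unset Printing Implicit Defensive.

Section Lists.
Variable n : nat.
Implicit Types u v s : seq 'I_n.

Lemma cnt_all2 u v t : all2 (fun a b : 'I_n => (a <= b)%N) u v ->
  count (fun c : 'I_n => t <= c) u <= count (fun c : 'I_n => t <= c) v.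
Proof.
elim: u v => [|a u IH] [|b v] //= /andP[ab /IH h].
case: (leqP t a) => ta /=; first by rewrite (leq_trans ta ab) add1n ltnS.
by rewrite add0n; apply: (leq_trans h); apply: leq_addl.
Qed.

Lemma all2_cnt u v : sorted (fun a b : 'I_n => (a <= b)%N) u ->
  sorted (fun a b : 'I_n => (a <= b)%N) v -> size u = size v ->
  (forall t, count (fun c : 'I_n => t <= c) u <= count (fun c : 'I_n => t <= c) v) ->
  all2 (fun a b : 'I_n => (a <= b)%N) u v.
Proof.
have tr : transitive (fun a b : 'I_n => (a <= b)%N) by move=> ???; apply: leq_trans.
elim: u v => [|a u IH] [|b v] //=.
rewrite !(path_sortedE tr) => /andP[au su] /andP[bv sv] [sz] H.
have Ha := H a; rewrite /= leqnn add1n in Ha.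
have cu : count (fun c : 'I_n => a <= c) u = size u by apply/eqP; rewrite -all_count.
rewrite cu sz in Ha.
have ab : a <= b.
  case: leqP Ha => // ba h; have := count_size (fun c : 'I_n => a <= c) v; lia.
rewrite ab /=; apply: IH => // t.
case: (leqP t b) => tb.
  have cv : count (fun c : 'I_n => t <= c) v = size v.
    apply/eqP; rewrite -all_count; apply/allP => x xv.
    by apply: leq_trans tb (allP bv x xv).
  by rewrite cv -sz count_size.
have := H t; rewrite /=.
have -> : (t <= b) = false by apply/negbTE; rewrite -ltnNge.
have -> : (t <= a) = false by apply/negbTE; rewrite -ltnNge; apply: leq_ltn_trans ab tb.
by [].
Qed.

Lemma cnt_take_dec s t i : sorted (fun a b : 'I_n => (b <= a)%N) s ->
  count (fun c : 'I_n => t <= c) (take i s) = minn i (count (fun c : 'I_n => t <= c) s).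
Proof.
have tr : transitive (fun a b : 'I_n => (b <= a)%N) by move=> ???  h1 h2; apply: leq_trans h2 h1.
elim: s i => [|a s IH] [|i] //=; rewrite ?min0n ?minn0 //.
rewrite (path_sortedE tr) => /andP[as_ ss].
case: (leqP t a) => ta.
  by rewrite IH // add1n minnSS.
have c0 : count (fun c : 'I_n => t <= c) s = 0.
  apply/eqP; rewrite -leqn0 leqNgt; rewrite -has_count; apply/negP => /hasP [x xs tx].
  by have := allP as_ x xs; rewrite /=; lia.
have c0' : count (fun c : 'I_n => t <= c) (take i s) = 0.
  apply/eqP; rewrite -leqn0 leqNgt; rewrite -has_count; apply/negP => /hasP [x /mem_take xs tx].
  by have := allP as_ x xs; rewrite /=; lia.
by rewrite c0 c0' add0n minn0.
Qed.

End Lists.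
Ltac clia := repeat match goal with
  | H : is_true (_ <= _) |- _ => revert H
  | H : (_ = _ :> nat) |- _ => revert H end;
  repeat match goal with |- context [#|?A|] => generalize (#|A|); intro end;
  repeat match goal with H : _ |- _ => clear H end;
  intros; lia.

Section Core.
Variables (n k : nat) (S : {set {set 'I_n}}).
Hypothesis cardS : forall A, A \in S -> #|A| = k.
Hypothesis exch : forall A B, A \in S -> B \in S -> forall a, a \in A -> a \notin B ->
  exists2 b, b \in B :\: A & (A :\ a) :|: [set b] \in S.

Definition indep (I : {set 'I_n}) := exists2 B, B \in S & I \subset B.

Lemma augment I J : indep I -> indep J -> #|I| < #|J| ->
  exists2 e, e \in J :\: I & indep (e |: I).
Proof.
move=> [A0 A0S IA0] [B BS JB] lt.
have c3 : forall A, A \in S -> I \subset A -> A \subset I :|: B ->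
   (forall e, e \in A :\: I -> e \notin J) -> False.
  move=> A AS IA AIB none.
  have sub : A :\: I \subset B :\: J.
    apply/subsetP => x xAI; rewrite inE (none x xAI) /=.
    move: xAI; rewrite inE => /andP[xI xA].
    by move: (subsetP AIB x xA); rewrite inE (negbTE xI).
  have := subset_leq_card sub.
  rewrite !cardsD (setIidPr IA) (setIidPr JB) (cardS AS) (cardS BS).
  have := subset_leq_card JB; rewrite (cardS BS); clia.
suff main : forall N A, A \in S -> I \subset A -> #|A :\: B| <= N ->
    exists2 e, e \in J :\: I & indep (e |: I)
  by exact: (main _ A0 A0S IA0 (leqnn _)).
  elim => [|N IHN] A AS IA hN.
  all: case: (pickP [pred e | e \in (A :\: I) :&: J]) => [e /=|none].
  1,3: rewrite !inE => /andP[/andP[eI eA] eJ]; exists e; first by rewrite inE eI.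
  1,2: by exists A => //; rewrite subUset sub1set eA IA.
  all: case: (pickP [pred x | x \in A :\: (I :|: B)]) => [x /=|none2].
  2,4: exfalso; apply: (c3 A AS IA).
  2,4: apply/subsetP => x xA; apply: contraT => xn; have := none2 x; rewrite /= inE xn xA //.
  2,3: by move=> e eA; have := none e; rewrite /= inE eA /= => ->.
  - rewrite !inE negb_or => /andP[/andP[xI xB] xA].
    have : x \in A :\: B by rewrite inE xB xA.
    move=> xAB; have : 0 < #|A :\: B| by apply/card_gt0P; exists x.
    clia.
  - rewrite !inE negb_or => /andP[/andP[xI xB] xA].
    have [b bBA A'S] := exch AS BS xA xB.
    apply: (IHN _ A'S).
      apply/subsetP => y yI; rewrite !inE (subsetP IA y yI) andbT.
      by apply/orP; left; apply: contraNneq xI => <-.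
    have sub : (A :\ x :|: [set b]) :\: B \subset (A :\: B) :\ x.
      apply/subsetP => y; rewrite !inE.
      move: bBA; rewrite inE => /andP[_ bB].
      case/andP => yB /orP[/andP[-> ->]|/eqP yb]; first by rewrite yB.
      by rewrite yb bB in yB.
    have := subset_leq_card sub.
    have xAB : x \in A :\: B by rewrite inE xB xA.
    have := cardsD1 x (A :\: B); rewrite xAB; clia.
Qed.

Lemma indep_card I : indep I -> #|I| <= k.
Proof. by case=> A AS IA; rewrite -(cardS AS) subset_leq_card. Qed.

Lemma extend I B : indep I -> B \in S ->
  exists2 B', B' \in S & I \subset B' /\ B' \subset I :|: B.
Proof.
move=> iI BS.
move: {2}(k - #|I|) (leqnn (k - #|I|)) => N.
elim: N I iI => [|N IHN] I iI hN.
  have cI := indep_card iI.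
  case: iI => A AS IA; exists A => //; split => //.
  have -> : A = I.
    apply/eqP; rewrite eq_sym eqEcard IA (cardS AS); clia.
  by rewrite subsetUl.
have cI := indep_card iI.
case: (ltnP #|I| k) => lt; last first.
  case: iI => A AS IA; exists A => //; split => //.
  have -> : A = I.
    apply/eqP; rewrite eq_sym eqEcard IA (cardS AS); clia.
  by rewrite subsetUl.
have iB : indep B by exists B.
have ltB : #|I| < #|B| by rewrite (cardS BS).
have [e eBI ieI] := augment iI iB ltB.
move: eBI; rewrite inE => /andP[eI eB].
have hN' : k - #|e |: I| <= N by rewrite cardsU1 eI; clia.
have [B' B'S [sub1 sub2]] := IHN _ ieI hN'.
exists B' => //; split.
  by apply: subset_trans sub1; rewrite subsetUr.
apply: (subset_trans sub2); rewrite subUset subsetUr andbT subUset subsetUl /=.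
by rewrite sub1set inE eB orbT.
Qed.

Variable w : 'I_n -> nat.
Hypothesis S0 : S != set0.

Lemma greedy_max : exists2 G, G \in S &
  forall (J B : {set 'I_n}) (t : nat), B \in S -> J \subset B ->
  #|[set e in J | t <= w e]| <= #|[set e in G | t <= w e]|.
Proof.
pose W (B : {set 'I_n}) := \sum_(x in B) w x.
have [G GS GW] : {G | G \in S & \max_(B in S) W B = W G}.
  apply: eq_bigmax_cond; by rewrite card_gt0.
exists G => // J B t BS JB.
rewrite leqNgt; apply/negP => lt.
pose U := [set e | t <= w e].
have eqU : forall C : {set 'I_n}, [set e in C | t <= w e] = C :&: U.
  by move=> C; apply/setP => x; rewrite !inE.
rewrite !eqU in lt.
have iK : indep (G :&: U) by exists G => //; rewrite subsetIl.
have iJ : indep (J :&: U) by exists B => //; apply: subset_trans (subsetIl _ _) JB.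
have [e eJK ieK] := augment iK iJ lt.
move: eJK; rewrite !inE => /andP[eGU /andP[eJ eU]].
have eG : e \notin G by move: eGU; rewrite eU andbT.
have [B' B'S [sub1 sub2]] := extend ieK GS.
have WB' : W B' <= W G by rewrite -GW; apply: (leq_bigmax_cond (P := fun B => B \in S)).
have C_G : B' :\ e \subset G.
  apply/subsetP => x; rewrite !inE => /andP[xe xB'].
  move: (subsetP sub2 x xB'); rewrite !inE (negbTE xe) /= => /orP[/andP[]|] //.
have eB' : e \in B' by apply: (subsetP sub1); rewrite !inE eqxx.
have cD : #|G :\: (B' :\ e)| == 1.
  rewrite cardsD (setIidPr C_G) (cardS GS).
  have := cardsD1 e B'; rewrite eB' (cardS B'S).
  have := subset_leq_card sub1; rewrite cardsU1.
  have : 0 < k.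
    by have := cardsD1 e B'; rewrite eB' (cardS B'S); clia.
  clia.
have [f fE] := cards1P cD.
have fG : f \in G :\: (B' :\ e) by rewrite fE set11.
move: (fG); rewrite !inE => /andP[fB'e fG'].
have fB' : f \notin B'.
  move: fB'e; rewrite negb_and negbK => /orP[/eqP fe|] //.
  by rewrite -fe fG' in eG.
have fU : f \notin U.
  apply: contra fB' => fU; apply: (subsetP sub1); move: fU; rewrite !inE => ->.
  by rewrite fG' orbT.
move: fU eU; rewrite !inE -ltnNge => ft te.
have : W G < W B'.
  rewrite /W (big_setID (B' :\ e)) (setIidPr C_G) fE big_set1.
  rewrite [in X in _ < X](bigD1 e) //=.
  have -> : \sum_(i in B' | i != e) w i = \sum_(i in B' :\ e) w i.
    by apply: eq_bigl => x; rewrite !inE andbC.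
  rewrite [X in _ < X]addnC ltn_add2l; exact: leq_trans ft te.
by move=> h; have := leq_trans h WB'; rewrite ltnn.
Qed.

End Core.

Section Main.
Variables (n k : nat).

Lemma incr_uniq (x : seq 'I_n) : incr x -> uniq x.
Proof.
apply: sorted_uniq; first by move=> ???; apply: ltn_trans.
by move=> a; rewrite /= ltnn.
Qed.

Lemma card_elts (x : seq 'I_n) : uniq x -> #|elts x| = size x.
Proof. by move=> u; rewrite /elts cardsE; apply/card_uniqP. Qed.

Lemma count_card (s : seq 'I_n) (P : pred 'I_n) : uniq s ->
  count P s = #|[set e in elts s | P e]|.
Proof.
move=> u; rewrite -size_filter -(card_uniqP (filter_uniq P u)).
by apply: eq_card => e; rewrite mem_filter !inE andbC.
Qed.

Lemma cnt_sort (r : rel 'I_n) (P : pred 'I_n) s : count P (sort r s) = count P s.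
Proof. by apply/seq.permP; rewrite perm_sort. Qed.

Lemma perm_of_key (f : 'I_n -> nat) :
  exists w : {perm 'I_n}, forall e e', f e < f e' -> w e < w e'.
Proof.
pose L := sort (fun a b => f a <= f b) (enum 'I_n).
have memL : forall e, e \in L by move=> e; rewrite mem_sort mem_enum.
have szL : size L = n by rewrite size_sort size_enum_ord.
pose g (e : 'I_n) : 'I_n := insubd e (index e L).
have gE : forall e, val (g e) = index e L.
  by move=> e; rewrite val_insubd -{2}szL index_mem memL.
have ginj : injective g.
  move=> e1 e2 /(congr1 val); rewrite !gE => h.
  exact: (index_inj e1 (memL e1) (memL e2) h).
exists (perm ginj) => e e' lt; rewrite !permE !gE.
have srt : sorted (fun a b => f a <= f b) L by apply: sort_sorted => a b; apply: leq_total.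
rewrite ltnNge; apply/negP => le.
have := sorted_leq_index (fun a b c => @leq_trans (f a) (f b) (f c)) (fun a => leqnn (f a))
   srt e' e (memL e') (memL e) le.
by rewrite leqNgt lt.
Qed.

Lemma threshold (P : pred 'I_n) (w : 'I_n -> nat) :
  (forall e e', P e -> ~~ P e' -> w e' < w e) -> exists t, forall e, (t <= w e) = P e.
Proof.
move=> H; exists (\max_(e | ~~ P e) (w e).+1) => e.
case: (boolP (P e)) => Pe.
  by apply/bigmax_leqP => e' Pe'; apply: H.
apply/negbTE; rewrite -ltnNge; exact: (leq_bigmax_cond (F := fun e => (w e).+1) e Pe).
Qed.

End Main.

Lemma bary_mem k n (X : {set k.-tuple 'I_n}) (y : k.-tuple 'I_n) :
  y \in bary X -> exists2 x, x \in X & perm_eq y x.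
Proof.
case/imset2P => x s xX _ ->; exists x => //.
by apply/tuple_permP; exists s.
Qed.

Lemma bary_in k n (X : {set k.-tuple 'I_n}) (y x : k.-tuple 'I_n) :
  x \in X -> perm_eq y x -> y \in bary X.
Proof.
move=> xX /tuple_permP [s /val_inj ->]; apply/imset2P; exists x s => //.
Qed.

Lemma dir1 (k n : nat) (X : {set k.-tuple 'I_n}) :
  (0 < k)%N -> (k <= n)%N ->
  (forall x, x \in X -> incr x) ->
  X != set0 -> is_matroid X -> coxeter_matroid (bary X).
Proof.
move=> k0 kn incrX X0 mat; split.
  apply/subsetP => y /bary_mem [x xX pyx]; rewrite inE (perm_uniq pyx).
  exact: incr_uniq (incrX x xX).
move=> w.
pose S := [set elts (x : seq 'I_n) | x : k.-tuple 'I_n in X].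
have cardS : forall A, A \in S -> #|A| = k.
  move=> A /imsetP [x xX ->]; rewrite card_elts ?size_tuple //.
  exact: incr_uniq (incrX x xX).
have exch : forall A B, A \in S -> B \in S -> forall a, a \in A -> a \notin B ->
    exists2 b, b \in B :\: A & (A :\ a) :|: [set b] \in S.
  move=> A B /imsetP [x xX ->] /imsetP [y yX ->] a aA aB.
  have [b [bB bA [C CX CE]]] := mat x y xX yX a aA aB.
  exists b; first by rewrite inE bA bB.
  apply/imsetP; exists C => //; rewrite CE; apply/setP => c.
  move: aA bA; rewrite /symdiff !inE => aA bA.
  have ab : a != b by apply: contraNneq bA => <-.
  case: (eqVneq c a) => [->|ca]; first by rewrite aA (negbTE ab).
  case: (eqVneq c b) => [->|cb]; first by rewrite bA /= !orbT.
  by rewrite /= !orbF; case: (c \in x).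
have S0 : S != set0.
  case/set0Pn: X0 => x0 x0X; apply/set0Pn; exists (elts (x0 : seq 'I_n)).
  exact: imset_f.
have [G GS Gmax] := greedy_max cardS exch (fun e => val (w e)) S0.
case/imsetP: GS => x0 x0X GE.
pose r := fun a b : 'I_n => (w b <= w a)%N.
pose z := sort r x0.
have sz : size z == k by rewrite size_sort size_tuple.
pose zt := Tuple sz.
have pz : perm_eq zt x0 by rewrite /= perm_sort.
have ux0 : uniq x0 := incr_uniq (incrX x0 x0X).
exists (map_tuple w zt); first by apply: imset_f; exact: bary_in x0X pz.
move=> y /imsetP [y0 /bary_mem [x xX py0x] ->] i /andP[i1 ik].
have ux : uniq x := incr_uniq (incrX x xX).
have uy0 : uniq y0 by rewrite (perm_uniq py0x).
rewrite /bruhat_sub /Pfx /=.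
have tot : total (fun a b : 'I_n => (a <= b)%N) by move=> a b; apply: leq_total.
apply: all2_cnt; rewrite ?sort_sorted // ?size_sort.
  by rewrite !size_takel // size_map size_tuple.
move=> t; rewrite !cnt_sort.
have srtm : sorted (fun a b : 'I_n => (b <= a)%N) (map w zt).
  rewrite sorted_map; apply: sort_sorted => a b; exact: leq_total.
rewrite [X in _ <= X]cnt_take_dec // leq_min; apply/andP; split.
  by apply: leq_trans (count_size _ _) _; rewrite size_takel // size_map size_tuple.
rewrite -map_take !count_map.
rewrite (count_card _ (take_uniq _ uy0)).
have -> : count (preim w (fun c : 'I_n => t <= c)) zt = count (preim w (fun c : 'I_n => t <= c)) x0.
  exact: (seq.permP pz).
rewrite (count_card _ ux0) -GE.
apply: (Gmax _ (elts (x : seq 'I_n))); first exact: imset_f.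
apply/subsetP => e; rewrite !inE => /mem_take; by rewrite (perm_mem py0x).
Qed.

Lemma dir2 (k n : nat) (X : {set k.-tuple 'I_n}) :
  (0 < k)%N -> (forall x, x \in X -> incr x) ->
  coxeter_matroid (bary X) -> is_matroid X.
Proof.
move=> k0 incrX [_ cox] A B AX BX a aA aB.
have cardX : forall x, x \in X -> #|elts (x : seq 'I_n)| = k.
  by move=> x xX; rewrite card_elts ?size_tuple //; exact: incr_uniq (incrX x xX).
pose A' := elts (A : seq 'I_n) :\ a.
pose BA := elts (B : seq 'I_n) :\: elts (A : seq 'I_n).
pose D := A' :|: BA.
pose f e := if e \in A' then 2 else if e \in BA then 1 else 0.
have [w wf] := perm_of_key f.
have [t1 Ht1] : exists t, forall e, (t <= w e) = (e \in A').
  apply: threshold => e e' Pe nPe'; apply: wf; rewrite /f Pe (negbTE nPe').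
  by case: ifP.
have [t2 Ht2] : exists t, forall e, (t <= w e) = (e \in D).
  apply: threshold => e e' Pe; rewrite in_setU negb_or => /andP[nA nB]; apply: wf.
  rewrite /f (negbTE nA) (negbTE nB).
  by case: ifP => // eA'; move: Pe; rewrite in_setU eA' /= => ->.
have [m mI mmax] := cox w.
case/imsetP: mI => z /bary_mem [C CX pzC] mE.
have gale : forall y : k.-tuple 'I_n, y \in X -> forall t,
    count (fun e => t <= w e) y <= count (fun e => t <= w e) C.
  move=> y yX t.
  have := mmax (map_tuple w y) (imset_f _ (bary_in yX (perm_refl y))) k.
  rewrite k0 leqnn => /(_ isT).
  rewrite /bruhat_sub /Pfx !take_oversize ?size_tuple // => /(cnt_all2 t).
  by rewrite !cnt_sort mE /= !count_map (seq.permP pzC).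
have uA : uniq A := incr_uniq (incrX A AX).
have uB : uniq B := incr_uniq (incrX B BX).
have uC : uniq C := incr_uniq (incrX C CX).
have h1 := gale A AX t1.
rewrite (eq_count Ht1) (eq_count Ht1) !count_card // in h1.
have h2 := gale B BX t2.
rewrite (eq_count Ht2) (eq_count Ht2) !count_card // in h2.
have A'A : A' \subset elts (A : seq 'I_n) by apply/subsetP => e; rewrite !inE => /andP[].
have e1 : [set e in elts (A : seq 'I_n) | e \in A'] = A'.
  by apply/setP => e; rewrite inE; case: (boolP (e \in A')) => h; rewrite ?andbT ?andbF // (subsetP A'A).
have e2 : [set e in elts (B : seq 'I_n) | e \in D] = elts (B : seq 'I_n).
  apply/setP => e; rewrite inE; case: (boolP (e \in elts (B : seq 'I_n))) => //= eB.
  move: (eB); rewrite !inE => eB'; rewrite eB' andbT.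
  case: (boolP (e \in (A : seq 'I_n))) => eA; rewrite ?orbT // andbT.
  by rewrite orbF; apply: contraNneq aB => <-.
rewrite e1 in h1; rewrite e2 in h2.
have cA' : #|A'|.+1 = k.
  have := cardsD1 a (elts (A : seq 'I_n)); rewrite aA (cardX A AX) add1n => h; exact: esym h.
have Q1 : [set e in elts (C : seq 'I_n) | e \in A'] = A'.
  apply/eqP; rewrite eqEcard h1 andbT; apply/subsetP => e; rewrite inE => /andP[].
  by [].
have A'C : A' \subset elts (C : seq 'I_n).
  by rewrite -Q1; apply/subsetP => e; rewrite inE => /andP[].
have CD : elts (C : seq 'I_n) \subset D.
  have Q2 : [set e in elts (C : seq 'I_n) | e \in D] = elts (C : seq 'I_n).
    apply/eqP; rewrite eqEcard (cardX C CX); move: (h2); rewrite (cardX B BX) => ->; rewrite andbT.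
    by apply/subsetP => e; rewrite inE => /andP[].
  by rewrite -Q2; apply/subsetP => e; rewrite inE => /andP[].
have cDif : #|elts (C : seq 'I_n) :\: A'| == 1.
  rewrite cardsD (setIidPr A'C) (cardX C CX); move: cA'; clia.
have [b bE] := cards1P cDif.
have bDif : b \in elts (C : seq 'I_n) :\: A' by rewrite bE set11.
move: (bDif); rewrite in_setD => /andP[bA' bC].
have bBA : b \in BA.
  by move: (subsetP CD b bC); rewrite in_setU (negbTE bA').
move: (bBA); rewrite in_setD => /andP[bA bB].
exists b; split => //.
have memC : forall c, (c \in elts (C : seq 'I_n)) = (c \in A') || (c == b).
  move=> c; apply/idP/idP.
    move=> cC; case: (boolP (c \in A')) => //= ncA.
    have : c \in elts (C : seq 'I_n) :\: A' by rewrite in_setD ncA cC.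
    by rewrite bE inE.
  by case/orP => [/(subsetP A'C)|/eqP ->].
exists C => //; apply/setP => c.
rewrite memC /symdiff /A' !inE.
move: aA bA; rewrite !inE => aA bA.
have ab : a != b by apply: contraNneq bA => <-.
case: (eqVneq c a) => [->|ca]; first by rewrite aA (negbTE ab).
case: (eqVneq c b) => [->|cb]; first by rewrite bA /= !orbT.
by rewrite /= !orbF; case: (c \in (A : seq 'I_n)).
Qed.

Theorem theorem4p1 (k n : nat) (X : {set k.-tuple 'I_n}) :
  (0 < k)%N -> (k <= n)%N ->
  (forall x, x \in X -> incr x) ->
  X != set0 ->
  (is_matroid X <-> coxeter_matroid (bary X)).
Proof.
move=> k0 kn incrX X0; split; first exact: dir1.
exact: dir2.
Qed.
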